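(* Let $L \geq 2$, $m = L+1$, $\gamma = (L+1)^3$, and for $i \in \{0,\ldots,L\}$, $k\in[m]$ let $\pi_i(A_k) = w_i(k)/\sum_{h=1}^m w_i(h)$ with $w_i(k) = \gamma^{2(i+1)k - k^2+1} + \sum_{r=0}^L\gamma^{(2r+1)(i+1)-r^2-r}$. Let $\overline{\pi}(\xi) = \prod_{i=0}^L \pi_i(A_{\xi_i})$ for $\xi\in[m]^{L+1}$, let $\lambda = (1, 2, \ldots, m)$ (i.e. $\lambda_i = i+1$), let $\mathcal{X}_\lambda$ be the set of states reachable from $\lambda$ by finitely many swaps of adjacent levels, and $\overline{\pi}_\lambda = \overline{\pi}/\overline{\pi}(\mathcal{X}_\lambda)$ on $\mathcal{X}_\lambda$. Let $S \subseteq \mathcal{X}_\lambda$ be the set of states $\xi$ for which there is a sequence $\lambda = \tau^0, \ldots, \tau^N = \xi$, each obtained from the previous by swapping the entries of two adjacent levels, such that every $\tau^s$ differs from $\lambda$ in at most $\lfloor\log_2 L\rfloor - 1$ coordinates. Then $\overline{\pi}_\lambda(S) > \frac{1}{2e}$.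
   Context: A swap of adjacent levels maps $\xi$ to $(j-1,j)\xi$, the vector with entries at positions $j-1$ and $j$ exchanged, $j\in\{1,\ldots,L\}$. Two states differ in coordinate $\ell$ if their $\ell$-th entries are unequal. *)

(* Defs.v *)
From HB Require Import structures.
From mathcomp Require Import all_boot all_order all_algebra all_fingroup.
From mathcomp Require Import all_classical all_reals all_analysis.
Set Implicit Arguments. Unset Strict Implicit. Unset Printing Implicit Defensive.
Import Order.TTheory GRing.Theory Num.Theory.
Local Open Scope ring_scope.

(* Levels are 0..L (type 'I_L.+1).  There are m = L+1 values; the value
   k in [m] = {1,..,m} is represented by the ordinal k-1 : 'I_L.+1. *)
Definition state (L : nat) := {ffun 'I_L.+1 -> 'I_L.+1}.

Section Defs.
Variable R : realType.
Variable L : nat.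

Definition gamma : R := ((L.+1) ^ 3)%:R.

Definition w (i k : nat) : R :=
  gamma ^ ((2 * (i + 1) * k)%:Z - (k ^ 2)%:Z + 1)
  + \sum_(r < L.+1) gamma ^ (((2 * r + 1) * (i + 1))%:Z - (r ^ 2)%:Z - r%:Z).

Definition pi_ (i k : nat) : R := w i k / \sum_(h < L.+1) w i h.+1.

Definition pibar (xi : state L) : R := \prod_(i < L.+1) pi_ i (xi i).+1.

(* lambda_i = i+1, i.e. the ordinal i *)
Definition lambda : state L := [ffun i => i].

Definition swap (j : 'I_L.+1) (xi : state L) : state L :=
  [ffun l => xi (tperm (inord j.-1 : 'I_L.+1) j l)].

Definition swap_step : rel (state L) :=
  fun xi zeta => [exists j : 'I_L.+1, (0 < j)%N && (zeta == swap j xi)].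

Definition Xlambda : {set state L} := [set xi | connect swap_step lambda xi].

Definition ndiff (xi zeta : state L) : nat := #|[set l | xi l != zeta l]|.

Definition Kbound : nat := (trunc_log 2 L).-1.

Definition inS (xi : state L) : Prop :=
  exists p : seq (state L),
    [/\ path swap_step lambda p, last lambda p = xi
      & all (fun tau => (ndiff tau lambda <= Kbound)%N) (lambda :: p)].

Definition pibar_lambda_S : R :=
  (\sum_(xi : state L | `[< inS xi >]) pibar xi)
  / (\sum_(xi in Xlambda) pibar xi).
End Defs.

(* Main.v *)
Require Import Defs.
From HB Require Import structures.
From mathcomp Require Import all_boot all_order all_algebra all_fingroup.
From mathcomp Require Import all_classical all_reals all_analysis.
From mathcomp Require Import zify ring lra.
Import Order.TTheory GRing.Theory Num.Theory.
Local Open Scope ring_scope.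

Lemma exprz_le (R : realType) (x : R) (e a : int) : 1 <= x -> e <= a -> x ^ e <= x ^ a.
Proof.
move=> x1 ea.
have x0 : 0 < x by apply: lt_le_trans x1.
have [n hn] : exists n : nat, a = e + n%:Z.
  exists `|a - e|%N; lia.
rewrite hn expfzDr ?gt_eqF // ler_pMr ?exprz_gt0 //; exact: exprn_ege1.
Qed.

Lemma expo1 (i k : nat) : k <> (i+1)%N ->
  ((2 * (i + 1) * k)%N%:Z - (k ^ 2)%N%:Z + 1 <= ((i+1)^2)%N%:Z :> int).
Proof.
move=> H.
have : (2 * (i + 1) * k + 1 <= (i+1)^2 + k^2)%N.
  have [h|h] : (k <= i \/ i + 2 <= k)%N by lia.
  nia. nia.
lia.
Qed.

Lemma expo2 (i r : nat) :
  (((2 * r + 1) * (i + 1))%N%:Z - (r ^ 2)%N%:Z - r%:Z <= ((i+1)^2)%N%:Z :> int).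
Proof.
have : ((2 * r + 1) * (i + 1) <= (i+1)^2 + r^2 + r)%N.
  have [h|h] : (r <= i \/ i + 1 <= r)%N by lia.
  nia. nia.
lia.
Qed.

Lemma gamma_ge1 (R : realType) (L : nat) : 1 <= gamma R L.
Proof. by rewrite /gamma ler1n expn_gt0. Qed.

Lemma gamma_gt0 (R : realType) (L : nat) : 0 < gamma R L.
Proof. exact: lt_le_trans (gamma_ge1 R L). Qed.

Definition GG (R : realType) (L i : nat) : R := gamma R L ^ (((i+1)^2)%N%:Z).

Lemma GG_gt0 (R : realType) (L i : nat) : 0 < GG R L i.
Proof. by rewrite /GG exprz_gt0 // gamma_gt0. Qed.

Lemma C_ge0 (R : realType) (L i : nat) :
  0 <= \sum_(r < L.+1) gamma R L ^ (((2 * r + 1) * (i + 1))%:Z - (r ^ 2)%:Z - r%:Z).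
Proof. by apply: sumr_ge0 => r _; rewrite exprz_ge0 // ltW // gamma_gt0. Qed.

Lemma C_le (R : realType) (L i : nat) :
  \sum_(r < L.+1) gamma R L ^ (((2 * r + 1) * (i + 1))%:Z - (r ^ 2)%:Z - r%:Z)
  <= (L.+1)%:R * GG R L i.
Proof.
apply: (@le_trans _ _ (\sum_(r < L.+1) GG R L i)).
  by apply: ler_sum => r _; apply: exprz_le (gamma_ge1 R L) (expo2 i r).
by rewrite sumr_const card_ord mulr_natl.
Qed.

Lemma w_ge0 (R : realType) (L i k : nat) : 0 <= w R L i k.
Proof. by rewrite /w addr_ge0 ?C_ge0 // exprz_ge0 // ltW // gamma_gt0. Qed.

Lemma w_le (R : realType) (L i k : nat) : k <> (i+1)%N -> w R L i k <= (L.+2)%:R * GG R L i.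
Proof.
move=> hk.
rewrite (_ : (L.+2)%:R = 1 + (L.+1)%:R) ?mulrDl ?mul1r; last by rewrite -natr1 addrC.
rewrite /w; apply: lerD; last exact: C_le.
rewrite /GG; apply: exprz_le; [exact: gamma_ge1 | exact: (expo1 i k hk)].
Qed.

Lemma w_ge (R : realType) (L i : nat) : gamma R L * GG R L i <= w R L i i.+1.
Proof.
rewrite /w.
have -> : (2 * (i + 1) * i.+1)%N%:Z - (i.+1 ^ 2)%N%:Z + 1 = ((i + 1) ^ 2)%N%:Z + 1 :> int.
  have : (2 * (i + 1) * i.+1 = (i.+1 ^ 2) + (i+1)^2)%N by nia.
  lia.
rewrite expfzDr ?gt_eqF ?gamma_gt0 // expr1z mulrC -/(GG R L i).
by rewrite lerDl C_ge0.
Qed.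

Lemma w_gt0 (R : realType) (L i : nat) : 0 < w R L i i.+1.
Proof. apply: lt_le_trans (w_ge R L i); by rewrite mulr_gt0 ?gamma_gt0 ?GG_gt0. Qed.

Lemma sumw_gt0 (R : realType) (L : nat) (i : 'I_L.+1) : 0 < \sum_(h < L.+1) w R L i h.+1.
Proof.
rewrite (bigD1 i) //=; apply: lt_le_trans (w_gt0 R L i) _.
by rewrite lerDl sumr_ge0 // => h _; apply: w_ge0.
Qed.

Lemma pi_ge0 (R : realType) (L i k : nat) : 0 <= pi_ R L i k.
Proof. by rewrite /pi_ divr_ge0 // ?w_ge0 // sumr_ge0 // => h _; apply: w_ge0. Qed.

Lemma sum_pi (R : realType) (L : nat) (i : 'I_L.+1) : \sum_(j < L.+1) pi_ R L i j.+1 = 1.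
Proof. by rewrite /pi_ -mulr_suml divff // gt_eqF // sumw_gt0. Qed.

Lemma pi_ge (R : realType) (L : nat) (i : 'I_L.+1) :
  (L.+1)%:R / (L.+2)%:R <= pi_ R L i i.+1.
Proof.
set G := GG R L i.
have G0 : 0 < G := GG_gt0 R L i.
have hW := w_ge R L i.
set W := w R L i i.+1 in hW *.
have hsum : \sum_(h < L.+1) w R L i h.+1 = W + \sum_(h < L.+1 | h != i) w R L i h.+1.
  by rewrite (bigD1 i).
set rest := \sum_(h < L.+1 | h != i) w R L i h.+1 in hsum.
have hrest : rest <= L%:R * ((L.+2)%:R * G).
  have hle : forall h : 'I_L.+1, h != i -> w R L i h.+1 <= (L.+2)%:R * G.
    move=> h hh; apply: w_le => E; move/eqP: hh; apply; apply/val_inj => /=; lia.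
  apply: (@le_trans _ _ (\sum_(h < L.+1 | h != i) (L.+2)%:R * G)).
    by apply: ler_sum.
  have : \sum_(h < L.+1) (L.+2)%:R * G = (L.+2)%:R * G + \sum_(h < L.+1 | h != i) (L.+2)%:R * G.
    by rewrite (bigD1 i).
  move=> E; rewrite sumr_const card_ord in E.
  have -> : \sum_(h < L.+1 | h != i) (L.+2)%:R * G = ((L.+2)%:R * G) *+ L.+1 - (L.+2)%:R * G.
    by rewrite E addrC addKr.
  by rewrite -[(_ * G) *+ L.+1]mulr_natl -natr1 mulrDl mul1r addrK.
have rest0 : 0 <= rest by apply: sumr_ge0 => h _; apply: w_ge0.
have W0 : 0 < W by apply: w_gt0.
have S0 : 0 < W + rest by apply: lt_le_trans W0 _; rewrite lerDl.
rewrite /pi_ hsum ler_pdivlMr // mulrAC ler_pdivrMr ?ltr0n // -/W.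
move: hW hrest; rewrite /gamma -/G natrX -!natr1.
set l := L%:R => hW hrest.
have l0 : 0 <= l by rewrite ler0n.
have h1 : (l + 1) * rest <= (l + 1) * (l * ((l + 1 + 1) * G)).
  by rewrite ler_wpM2l // addr_ge0.
have h2 : (l + 1) * (l * ((l + 1 + 1) * G)) <= (l + 1) ^+ 3 * G.
  rewrite -subr_ge0.
  have -> : (l + 1) ^+ 3 * G - (l + 1) * (l * ((l + 1 + 1) * G)) = (l + 1) * G by ring.
  by rewrite mulr_ge0 // ?addr_ge0 // ltW.
lra.
Qed.

Lemma total_pibar (R : realType) (L : nat) : \sum_(xi : state L) pibar R xi = 1.
Proof.
rewrite /pibar.
rewrite -(bigA_distr_bigA (fun (i : 'I_L.+1) (j : 'I_L.+1) => pi_ R L i j.+1)) /=.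
by rewrite big1 // => i _; apply: sum_pi.
Qed.

Lemma pibar_ge0 (R : realType) (L : nat) (xi : state L) : 0 <= pibar R xi.
Proof. by rewrite /pibar prodr_ge0 // => i _; apply: pi_ge0. Qed.

Theorem lemma13 (R : realType) (L : nat) (hL : (2 <= L)%N) :
  1 / (2 * expR 1) < pibar_lambda_S R L.
Proof.
set c : R := (L.+1)%:R / (L.+2)%:R.
set q := c ^+ L.+1.
have c0 : 0 <= c by rewrite /c divr_ge0 // ler0n.
have q0 : 0 < q.
  by rewrite /q exprn_gt0 // /c divr_gt0 // ltr0n.
have hP : q <= pibar R (lambda L).
  have -> : q = \prod_(i < L.+1) c by rewrite prodr_const card_ord.
  rewrite /pibar; apply: ler_prod => i _; apply/andP; split => //.
  rewrite /lambda ffunE; exact: pi_ge.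
have hE : 1 <= q * expR 1.
  have m0 : 0 < (L.+1)%:R :> R by rewrite ltr0n.
  have h1 : (L.+2)%:R / (L.+1)%:R <= expR (1 / (L.+1)%:R) :> R.
    apply: le_trans (expR_ge1Dx _).
    by rewrite -[(L.+2)%:R]natr1 mulrDl divff ?gt_eqF.
  have h2 : ((L.+2)%:R / (L.+1)%:R) ^+ L.+1 <= expR 1 :> R.
    have -> : expR 1 = expR (1 / (L.+1)%:R) ^+ L.+1 :> R.
      by rewrite -expRM_natl mul1r divff // gt_eqF.
    apply: lerXn2r => //; rewrite nnegrE ?divr_ge0 ?ler0n // ltW // expR_gt0.
  have h3 : q * ((L.+2)%:R / (L.+1)%:R) ^+ L.+1 = 1.
    rewrite /q -exprMn /c mulf_div [(L.+1)%:R * _]mulrC divff ?expr1n //.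
  by rewrite -[X in X <= _]h3 ler_wpM2l // ltW.
have hS : pibar R (lambda L) <= \sum_(xi : state L | `[< inS xi >]) pibar R xi.
  rewrite (bigD1 (lambda L)); last first.
    apply/asboolP; exists [::]; split; [by [] | by [] | ].
    apply/allP => x; rewrite inE => /eqP ->; rewrite /ndiff.
    have -> : #|[set l | lambda L l != lambda L l]| = 0%N.
      by apply/eqP; rewrite cards_eq0; apply/eqP/setP => l; rewrite !inE eqxx.
    exact: leq0n.
  by rewrite lerDl sumr_ge0 // => xi _; apply: pibar_ge0.
have hX1 : \sum_(xi in Xlambda L) pibar R xi <= 1.
  rewrite -(total_pibar R L) big_mkcond /=; apply: ler_sum => xi _.
  by case: ifP => _ //; apply: pibar_ge0.
have hX0 : pibar R (lambda L) <= \sum_(xi in Xlambda L) pibar R xi.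
  rewrite (bigD1 (lambda L)); last by rewrite inE connect0.
  by rewrite lerDl sumr_ge0 // => xi _; apply: pibar_ge0.
rewrite /pibar_lambda_S.
set SS := \sum_(xi : state L | `[< inS xi >]) pibar R xi in hS *.
set SX := \sum_(xi in Xlambda L) pibar R xi in hX1 hX0 *.
have SX0 : 0 < SX by apply: lt_le_trans hX0; apply: lt_le_trans hP.
have h4 : SS <= SS / SX.
  rewrite ler_pdivlMr // ler_piMr //; apply: le_trans hS; exact: pibar_ge0.
apply: lt_le_trans h4; apply: lt_le_trans hS; apply: lt_le_trans hP.
have e0 : 0 < expR 1 :> R by apply: expR_gt0.
rewrite ltr_pdivrMr ?mulr_gt0 //.
lra.
Qed.
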